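(* For any finite graph $G$ and integer $k\ge0$: $\alpha(G)=k$ if and only if $G$ has an extended independent set of order $k$ but no extended independent set of any order larger than $k$.
   Context: Let $G$ be a graph. An extended independent set of order $k$ in $G$ is a set $K$ of $k+r$ vertices, for some integer $0\le r\le k$, such that: (1) the induced subgraph $G[K]$ has no cycles, has exactly $2r$ non-isolated vertices, and the subgraph of $G[K]$ induced on these $2r$ vertices has a perfect matching; and (2) for every vertex $v\notin K$, the set $\mathcal N(v)\cap K$ (where $\mathcal N(v)$ is the neighbourhood of $v$) contains at least two isolated vertices of $G[K]$, or contains at least two vertices of the same connected component of $G[K]$. $\alpha(G)$ is the independence number of $G$. *)

(* Defs.v *)
(* A finite simple graph is a symmetric irreflexive
   relation e on a finType T. *)
From mathcomp Require Import all_boot.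
Set Implicit Arguments. Unset Strict Implicit. Unset Printing Implicit Defensive.

Section Graph.
Variables (T : finType) (e : rel T).

Definition independent (S : {set T}) : bool :=
  [forall x in S, forall y in S, ~~ e x y].

Definition alpha : nat := \max_(S : {set T} | independent S) #|S|.

Definition induced_rel (K : {set T}) : rel T :=
  [rel x y | [&& x \in K, y \in K & e x y]].

Definition acyclic_in (K : {set T}) : Prop :=
  forall c : seq T, uniq c -> 2 < size c -> {subset c <= K} ->
    ~~ cycle (induced_rel K) c.

Definition nonisolated (K : {set T}) : {set T} :=
  [set x in K | [exists y in K, e x y]].
Definition isolated (K : {set T}) : {set T} := K :\: nonisolated K.

Definition has_perfect_matching (N : {set T}) : Prop :=
  exists M : {set {set T}}, partition M N /\
    forall B, B \in M -> exists x y, [/\ B = [set x; y], x != y & e x y].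

Definition nbhd (v : T) : {set T} := [set u | e v u].

Definition ext_indep (k : nat) (K : {set T}) : Prop :=
  exists r : nat, [/\ r <= k, #|K| = k + r,
    acyclic_in K,
    #|nonisolated K| = 2 * r &
    has_perfect_matching (nonisolated K)] /\
    forall v, v \notin K ->
      (exists u w, [/\ u != w, u \in nbhd v :&: isolated K &
                         w \in nbhd v :&: isolated K])
      \/
      (exists u w, [/\ u != w, u \in nbhd v :&: K, w \in nbhd v :&: K &
                         connect (induced_rel K) u w]).

End Graph.

(* Main.v *)
Require Import Defs.
From mathcomp Require Import all_boot zify.
From Stdlib Require Import Classical.
Set Implicit Arguments. Unset Strict Implicit.

Lemma acyc_sub (T : finType) (e : rel T) (N N' : {set T}) :
  N' \subset N -> acyclic_in e N -> acyclic_in e N'.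
Proof.
move=> sNN aN c u sz sub; apply/negP => cyc.
have := aN c u sz (fun x hx => subsetP sNN _ (sub x hx)).
move/negP; apply; apply: sub_cycle cyc => x y /=.
rewrite /induced_rel /= => /and3P[xi yi exy]; by rewrite (subsetP sNN _ xi) (subsetP sNN _ yi).
Qed.

Definition good {T : finType} (e : rel T) (N : {set T}) x s :=
  [&& uniq (x :: s), all [in N] (x :: s) & path (induced_rel e N) x s].

Lemma good_size (T : finType) (e : rel T) (N : {set T}) x s :
  good e N x s -> size (x :: s) <= #|T|.
Proof.
case/and3P=> u _ _; rewrite -(card_uniqP u); exact: max_card.
Qed.

Lemma leaf_step (T : finType) (e : rel T) (esym : symmetric e)
  (eirr : irreflexive e) (N : {set T}) :
  acyclic_in e N ->
  (forall x, x \in N -> exists y z, [/\ y \in N, z \in N, e x y, e x z & y != z]) ->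
  forall x s, good e N x s -> exists w, good e N w (x :: s).
Proof.
move=> aN H x s /and3P[u al pa].
have xN : x \in N by move: al => /= /andP[].
have [y [z [yN zN exy exz yz]]] := H x xN.
have [w [wN exw wnot]] : exists w, [/\ w \in N, e x w & forall a s', s = a :: s' -> w != a].
  case: s u al pa => [|a s'] u al pa.
    by exists y; split=> // a s'.
  case: (eqVneq y a) => [ya|ya].
    exists z; split=> // a' s'' [<- _]; by rewrite -ya eq_sym.
  by exists y; split=> // a' s'' [<- _].
case win: (w \in x :: s); last first.
  exists w; apply/and3P; split.
  - by rewrite cons_uniq win u.
  - by rewrite /= wN.
  - by rewrite /= pa andbT /induced_rel /= xN wN esym exw.
exfalso.
have wx : w != x by apply/eqP => wx; move: exw; rewrite wx eirr.
move: win; rewrite inE (negbTE wx) /=.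
case: s u al pa wnot => [|a s'] // u al pa wnot.
have wa := wnot a s' erefl.
rewrite inE (negbTE wa) /= => win.
case/splitPr: win u al pa wnot => p1 p2; rewrite -cat_rcons => u al pa _.
have := aN (x :: a :: rcons p1 w).
have u' : uniq (x :: a :: rcons p1 w).
  by move: u; rewrite -cat_cons -cat_cons cat_uniq => /andP[].
have sz : 2 < size (x :: a :: rcons p1 w) by rewrite /= size_rcons.
have sub : {subset x :: a :: rcons p1 w <= N}.
  move=> t ht; move/allP: al; apply; rewrite -cat_cons -cat_cons mem_cat ht //.
move/(_ u' sz sub)/negP; apply.
rewrite /cycle rcons_path; apply/andP; split.
  by move: pa; rewrite -cat_cons cat_path => /andP[].
by rewrite last_cons last_rcons /induced_rel /= wN xN esym exw.
Qed.

Lemma leaf (T : finType) (e : rel T) (esym : symmetric e)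
  (eirr : irreflexive e) (N : {set T}) x0 :
  acyclic_in e N -> x0 \in N ->
  exists2 x, x \in N & forall y z, y \in N -> z \in N -> e x y -> e x z -> y = z.
Proof.
move=> aN x0N; apply: NNPP => nH.
have H : forall x, x \in N -> exists y z, [/\ y \in N, z \in N, e x y, e x z & y != z].
  move=> x xN; apply: NNPP => nx; apply: nH; exists x => // y z yN zN exy exz.
  apply: NNPP => yz; apply: nx; exists y, z; split=> //; exact/eqP.
have st := @leaf_step T e esym eirr N aN H.
suff: forall n x s, good e N x s -> #|T| <= size s + n -> False.
  by move/(_ #|T| x0 [::]); apply=> //; rewrite /good /= x0N.
elim=> [|n IH] x s g le.
  have := @good_size T e N x s g; rewrite addn0 in le => /= h. by have := leq_trans h le; rewrite ltnn.
have [w g'] := st x s g; apply: (IH w (x :: s) g'); by rewrite /= addSnnS.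
Qed.

Lemma indepP (T : finType) (e : rel T) (S : {set T}) :
  (forall x y, x \in S -> y \in S -> ~~ e x y) <-> independent e S.
Proof.
split.
  move=> H; apply/forallP => x; apply/implyP => xS; apply/forallP => y;
  apply/implyP => yS; exact: H.
move=> /forallP H x y xS yS; move: (H x) => /implyP/(_ xS)/forallP/(_ y)/implyP; exact.
Qed.

Lemma indepU1 (T : finType) (e : rel T) (esym : symmetric e)
  (eirr : irreflexive e) (S : {set T}) x :
  independent e S -> (forall z, z \in S -> ~~ e x z) -> independent e (x |: S).
Proof.
move=> /indepP iS H; apply/indepP => a b; rewrite !inE.
case/orP=> [/eqP->|aS]; case/orP=> [/eqP->|bS].
- by rewrite eirr.
- exact: H.
- rewrite esym; exact: H.
- exact: iS.
Qed.

Lemma half_indep (T : finType) (e : rel T) (esym : symmetric e)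
  (eirr : irreflexive e) n (N : {set T}) :
  #|N| <= n -> acyclic_in e N ->
  exists I : {set T}, [/\ I \subset N, independent e I & #|N| <= 2 * #|I|].
Proof.
elim: n N => [|n IH] N le aN.
  exists set0; split; rewrite ?sub0set //; last by lia.
  by apply/indepP => x y; rewrite inE.
case: (set_0Vmem N) => [->|[x0 x0N]].
  exists set0; split; rewrite ?sub0set ?cards0 //.
  by apply/indepP => x y; rewrite inE.
have [x xN lf] := leaf esym eirr aN x0N.
case: (boolP [exists y in N, e x y]) => [/existsP[y /andP[yN exy]]|noy].
  set N' := N :\ x :\ y.
  have sN : N' \subset N by rewrite /N' subDset subsetU // subD1set orbT.
  have cN : #|N| = (#|N'|).+2.
    rewrite (cardsD1 x N) xN (cardsD1 y (N :\ x)) !inE yN andbT.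
    have -> : y != x by apply/eqP => yx; move: exy; rewrite yx eirr.
    by [].
  have [I [sI iI cI]] := IH N' ltac:(lia) (acyc_sub sN aN).
  have xI : x \notin I.
    by apply/negP => /(subsetP sI); rewrite !inE eqxx andbF.
  exists (x |: I); split.
  - by rewrite subUset sub1set xN (subset_trans sI sN).
  - apply: indepU1 => // z zI; apply/negP => exz.
    have zN' := subsetP sI _ zI.
    move: zN'; rewrite !inE (lf z y) ?eqxx //.
    by move: (subsetP sN _ (subsetP sI _ zI)).
  - rewrite cardsU1 xI; lia.
set N' := N :\ x.
have sN : N' \subset N by rewrite /N' subD1set.
have cN : #|N| = (#|N'|).+1 by rewrite (cardsD1 x N) xN.
have [I [sI iI cI]] := IH N' ltac:(lia) (acyc_sub sN aN).
have xI : x \notin I by apply/negP => /(subsetP sI); rewrite !inE eqxx.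
exists (x |: I); split.
- by rewrite subUset sub1set xN (subset_trans sI sN).
- apply: indepU1 => // z zI; apply/negP => exz; move/negP: noy; apply.
  by apply/existsP; exists z; rewrite exz (subsetP sN _ (subsetP sI _ zI)).
- rewrite cardsU1 xI; lia.
Qed.

Lemma alpha_ge (T : finType) (e : rel T) (S : {set T}) :
  independent e S -> #|S| <= alpha e.
Proof. move=> iS; exact: (@leq_bigmax_cond _ (independent e) (fun S => #|S|) S). Qed.

Lemma alpha_att (T : finType) (e : rel T) :
  exists S, independent e S /\ #|S| = alpha e.
Proof.
have i0 : independent e set0 by apply/indepP => x y; rewrite inE.
have : 0 < #|independent e| by apply/card_gt0P; exists set0.
case/(eq_bigmax_cond (fun S : {set T} => #|S|)) => S iS eqS.
by exists S; split => //; rewrite /alpha eqS.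
Qed.

Lemma iso_no (T : finType) (e : rel T) (K : {set T}) x y :
  x \in isolated e K -> y \in K -> ~~ e x y.
Proof.
rewrite !inE => /andP[nx xK] yK; apply/negP => exy; move/negP: nx; apply.
by rewrite xK /=; apply/existsP; exists y; rewrite yK.
Qed.

Lemma card_iso (T : finType) (e : rel T) (K : {set T}) :
  #|isolated e K| + #|nonisolated e K| = #|K|.
Proof.
have sub : nonisolated e K \subset K by apply/subsetP => x; rewrite inE => /andP[].
rewrite /isolated cardsD (setIidPr sub) subnK //; exact: subset_leq_card.
Qed.

Lemma ext_le_alpha (T : finType) (e : rel T) (esym : symmetric e)
  (eirr : irreflexive e) k K : ext_indep e k K -> k <= alpha e.
Proof.
case=> r [[rk cK aK cN _] _].
have sub : nonisolated e K \subset K by apply/subsetP => x; rewrite inE => /andP[].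
have [I [sI iI cI]] := half_indep esym eirr (leqnn _) (acyc_sub sub aK).
have ci := card_iso e K.
have dj : isolated e K :&: I = set0.
  apply/setP => x; rewrite in_set0 in_setI /isolated in_setD; apply/negP => /andP[/andP[/negP nx _] xI].
  by apply: nx; apply: (subsetP sI).
have iJ : independent e (isolated e K :|: I).
  apply/indepP => x y; rewrite !in_setU.
  have isoK : forall z, z \in isolated e K -> z \in K.
    by move=> z; rewrite /isolated in_setD => /andP[].
  have IK : forall z, z \in I -> z \in K by move=> z /(subsetP sI) /(subsetP sub).
  have isoin : forall z, z \in isolated e K = (z \notin nonisolated e K) && (z \in K).
    by move=> z; rewrite /isolated in_setD.
  case/orP => [xi|xI]; case/orP => [yi|yI].
  - exact: (iso_no xi (isoK _ yi)).
  - exact: (iso_no xi (IK _ yI)).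
  - rewrite esym; exact: (iso_no yi (IK _ xI)).
  - by move/indepP: iI; apply.
have := alpha_ge iJ.
rewrite cardsU dj cards0 subn0.
rewrite /isolated in ci *.
lia.
Qed.

Lemma acyc_indep (T : finType) (e : rel T) (S : {set T}) :
  independent e S -> acyclic_in e S.
Proof.
move=> /indepP iS [|x [|y p]] //= _ _ _.
rewrite /= /induced_rel /=; apply/negP => /andP[/and3P[xS yS exy] _].
by move: (iS x y xS yS); rewrite exy.
Qed.

Lemma acyc_add (T : finType) (e : rel T) (esym : symmetric e) (K : {set T}) v :
  acyclic_in e K -> v \notin K ->
  ~ (exists u w, [/\ u != w, u \in nbhd e v :&: K, w \in nbhd e v :&: K &
                         connect (induced_rel e K) u w]) ->
  acyclic_in e (v |: K).
Proof.
move=> aK vK nB c u sz sub; apply/negP => cyc.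
have sK : {in K &, subrel (induced_rel e (v |: K)) (induced_rel e K)}.
  by move=> x y xK yK; rewrite /induced_rel /= xK yK => /and3P[_ _ ->].
case vc: (v \in c); last first.
  have allK : all [in K] c.
    apply/allP => x xc; have := sub x xc; rewrite in_setU1.
    case/orP => // /eqP xv; by rewrite -xv xc in vc.
  have := aK c u sz (fun x xc => allP allK x xc).
  by rewrite (sub_in_cycle sK allK cyc).
case/rot_to: vc => i p Hr.
have u' : uniq (v :: p) by rewrite -Hr rot_uniq.
have cyc' : cycle (induced_rel e (v |: K)) (v :: p) by rewrite -Hr rot_cycle.
have sz' : 2 < size (v :: p) by rewrite -Hr size_rot.
have subp : {subset p <= K}.
  move=> x xp; have : x \in c by rewrite -(mem_rot i) Hr inE xp orbT.
  move/sub; rewrite in_setU1; case/orP => // /eqP xv.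
  by move: u'; rewrite /= -xv xp.
case: p u' cyc' sz' subp {Hr} => [|a q] // u' cyc' sz' subp.
case/lastP: q u' cyc' sz' subp => [|q b] // u' cyc' sz' subp.
apply: nB; exists a, b.
move: cyc'; rewrite /cycle rcons_cons /= => /andP[/and3P[_ _ eva]].
rewrite rcons_path last_rcons => /andP[pa /and3P[_ _ ebv]].
have aK0 : a \in K by apply: subp; rewrite inE eqxx.
have bK : b \in K by apply: subp; rewrite inE mem_rcons inE eqxx orbT.
split.
- apply/eqP => ab; move: u'; rewrite /= ab mem_rcons inE eqxx /=.
  by rewrite andbF.
- by rewrite in_setI inE eva aK0.
- by rewrite in_setI inE esym ebv bK.
- apply/connectP; exists (rcons q b); last by rewrite last_rcons.
  apply: (sub_in_path sK) pa; apply/allP => x; rewrite inE => /orP[/eqP->//|xq].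
  by apply: subp; rewrite inE xq orbT.
Qed.

Definition pre (T : finType) (e : rel T) (K : {set T}) r :=
  [/\ #|K| = alpha e + r, acyclic_in e K, #|nonisolated e K| = 2 * r &
      has_perfect_matching e (nonisolated e K)].

Lemma one_step (T : finType) (e : rel T) (esym : symmetric e)
  (eirr : irreflexive e) (K : {set T}) r :
  pre e K r -> (exists K', ext_indep e (alpha e) K') \/
     (exists v, v \notin K /\ pre e (v |: K) r.+1).
Proof.
move=> [cK aK cN pm].
case: (classic (forall v, v \notin K ->
      (exists u w, [/\ u != w, u \in nbhd e v :&: isolated e K &
                         w \in nbhd e v :&: isolated e K])
      \/
      (exists u w, [/\ u != w, u \in nbhd e v :&: K, w \in nbhd e v :&: K &
                         connect (induced_rel e K) u w]))) => [Hall|Hn].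
  left; exists K, r; split => //; split => //.
  have := card_iso e K; rewrite cN cK; lia.
right.
have [v Hv] := not_all_ex_not _ _ Hn.
have [vK Hv2] := imply_to_and _ _ Hv.
have [nA nB] := not_or_and _ _ Hv2.
have aK' := acyc_add esym aK vK nB.
have cK' : #|v |: K| = #|K|.+1 by rewrite cardsU1 vK.
have subN : nonisolated e K \subset K by apply/subsetP => x; rewrite inE => /andP[].
have isoK : forall z, z \in isolated e K -> z \in K.
  by move=> z; rewrite /isolated in_setD => /andP[].
have isoN : forall z, z \in isolated e K -> z \notin nonisolated e K.
  by move=> z; rewrite /isolated in_setD => /andP[].
case: (set_0Vmem (nbhd e v :&: isolated e K)) => [H0|[u uin]]; last first.
  exists v; split => //.
  have uK : u \in K by apply: isoK; move: uin; rewrite in_setI => /andP[].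
  have uiso : u \in isolated e K by move: uin; rewrite in_setI => /andP[].
  have evu : e v u by move: uin; rewrite in_setI inE => /andP[].
  have uN := isoN _ uiso.
  have uv : u != v by apply/eqP => uv; rewrite -uv uK in vK.
  have vN : v \notin nonisolated e K by apply/negP => /(subsetP subN); rewrite (negbTE vK).
  have eqN : nonisolated e (v |: K) = [set u; v] :|: nonisolated e K.
    apply/setP => x; rewrite !in_setU !in_set1.
    rewrite /nonisolated !inE.
    apply/idP/idP.
      case/andP => /orP[/eqP->|xK]; first by rewrite eqxx orbT.
      case/existsP => y /andP[]; rewrite in_setU1 => /orP[/eqP->|yK] exy; last first.
        by rewrite xK /=; apply/orP; right; apply/existsP; exists y; rewrite yK.
      case: (boolP (x \in nonisolated e K)) => [xN|xN].
        by move: xN; rewrite inE => /andP[_ ->]; rewrite xK !orbT.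
      case: (eqVneq x u) => [->|xu]; first done.
      exfalso; apply: nA; exists u, x; split => //; first by rewrite eq_sym.
      by rewrite in_setI inE esym exy /isolated in_setD xN xK.
    case/orP => [/orP[/eqP->|/eqP->]|/andP[xK /existsP[y /andP[yK exy]]]].
    - rewrite uK orbT /=; apply/existsP; exists v; rewrite in_setU1 eqxx esym evu //.
    - rewrite eqxx /=; apply/existsP; exists u; rewrite in_setU1 uK orbT evu //.
    - by rewrite xK orbT /=; apply/existsP; exists y; rewrite in_setU1 yK orbT.
  split.
  - by rewrite cK' cK addnS.
  - exact: aK'.
  - rewrite eqN -setUA cardsU1 in_setU1 negb_or uv uN cardsU1 vN cN; lia.
  - case: pm => M [pM bM]; exists ([set u; v] |: M); split.
      rewrite eqN; apply: partitionU1 => //.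
        by apply/set0Pn; exists u; rewrite !inE eqxx.
      rewrite -setI_eq0; apply/eqP/setP => x; rewrite !inE.
      apply/negP => /andP[/orP[/eqP->|/eqP->] xN].
        by move/negP: uN; apply; rewrite inE.
      by move: xN; rewrite (negbTE vK).
    move=> B; rewrite in_setU1 => /orP[/eqP->|BM]; last exact: bM.
    by exists u, v; split => //; rewrite esym.
exfalso.
set N' := v |: nonisolated e K.
have sN' : N' \subset v |: K by rewrite /N' setUS.
have [I [sI iI cI]] := half_indep esym eirr (leqnn _) (acyc_sub sN' aK').
have vN : v \notin nonisolated e K by apply/negP => /(subsetP subN); rewrite (negbTE vK).
have cN' : #|N'| = (2 * r).+1 by rewrite /N' cardsU1 vN cN.
have IK : forall z, z \in I -> z = v \/ z \in K.
  move=> z /(subsetP sI); rewrite in_setU1 => /orP[/eqP->|zN]; first by left.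
  by right; apply: (subsetP subN).
have dj : isolated e K :&: I = set0.
  apply/setP => x; rewrite in_set0 in_setI; apply/negP => /andP[xi xI].
  have := subsetP sI _ xI; rewrite in_setU1 => /orP[/eqP xv|xN].
    by move: (isoK _ xi); rewrite xv (negbTE vK).
  by move: (isoN _ xi); rewrite xN.
have isv : forall x, x \in isolated e K -> ~~ e x v.
  move=> x xi; apply/negP => exv; move/setP: H0 => /(_ x).
  by rewrite in_set0 in_setI inE esym exv xi.
have iJ : independent e (isolated e K :|: I).
  apply/indepP => x y; rewrite !in_setU.
  case/orP => [xi|xI]; case/orP => [yi|yI].
  - exact: (iso_no xi (isoK _ yi)).
  - by case: (IK _ yI) => [->|yK]; [exact: isv | exact: iso_no xi yK].
  - by rewrite esym; case: (IK _ xI) => [->|xK]; [exact: isv | exact: iso_no yi xK].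
  - by move/indepP: iI; apply.
have := alpha_ge iJ.
rewrite cardsU dj cards0 subn0.
have := card_iso e K; rewrite cN cK.
lia.
Qed.

Lemma exists_ext (T : finType) (e : rel T) (esym : symmetric e)
  (eirr : irreflexive e) : exists K, ext_indep e (alpha e) K.
Proof.
suff: forall n (K : {set T}) r, #|T| <= #|K| + n -> pre e K r ->
    exists K, ext_indep e (alpha e) K.
  move=> H; case: (alpha_att e) => S [iS cS]; apply: (H #|T| S 0).
    exact: leq_addl.
  split.
  - by rewrite cS addn0.
  - exact: acyc_indep.
  - rewrite muln0; apply/eqP; rewrite cards_eq0; apply/eqP/setP => x.
    rewrite !inE; apply/negP => /andP[xS /existsP[y /andP[yS exy]]].
    by move/indepP: iS => /(_ x y xS yS); rewrite exy.
  - have -> : nonisolated e S = set0.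
      apply/setP => x; rewrite !inE; apply/negP => /andP[xS /existsP[y /andP[yS exy]]].
      by move/indepP: iS => /(_ x y xS yS); rewrite exy.
    exists set0; split; first by rewrite partition_set0.
    by move=> B; rewrite inE.
elim=> [|n IH] K r le pK; case: (one_step esym eirr pK) => // [[v [vK pK']]].
  exfalso; have h : #|v |: K| <= #|T| := max_card _.
  rewrite cardsU1 vK addn0 in h le.
  by have := leq_trans h le; rewrite ltnn.
apply: (IH _ _ _ pK'); by rewrite cardsU1 vK /= add1n addSnnS.
Qed.

Theorem lemma1p1 (T : finType) (e : rel T) (esym : symmetric e)
  (eirr : irreflexive e) (k : nat) :
  alpha e = k <->
  ((exists K : {set T}, ext_indep e k K) /\
   (forall (k' : nat) (K : {set T}), k < k' -> ~ ext_indep e k' K)).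
Proof.
split.
  move=> <-; split; first exact: exists_ext.
  move=> k' K lt /(ext_le_alpha esym eirr) le.
  by have := leq_trans lt le; rewrite ltnn.
case=> [[K eK] nlarge].
have le := ext_le_alpha esym eirr eK.
have [K' eK'] := exists_ext esym eirr.
apply/eqP; rewrite eqn_leq le andbT leqNgt; apply/negP => lt.
exact: nlarge _ _ lt eK'.
Qed.
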